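(* In the Jolteon protocol described in the context, if a block $B$ is globally direct-committed, then any timeout certificate of a round higher than $B.r$ contains a $qc_{high}$ of round at least $B.r$.
   Context: Jolteon protocol. There are $n=3f+1$ replicas, at most $f$ Byzantine, the rest honest; reliable authenticated channels; ideal threshold signatures in which $2f+1$ shares on the same message from distinct replicas combine into a threshold signature. A block is $B=(id,qc,tc,r,v,txn)$, with $qc$ a quorum certificate of its parent, $tc$ a timeout certificate or $\bot$, round $r$, view $v=0$, transactions $txn$, and $id$ a collision-resistant hash of the contents. A quorum certificate (QC) for $B$ is a threshold signature on $(B.id,B.r,B.v)$ from $2f+1$ shares (votes); $qc.r=B.r$; $B$ is certified if a QC for it exists; a genesis block of round $0$ has a QC. QCs are compared by round. A timeout message for round $r$ is a share on $r$ with the sender's $qc_{high}$; a timeout certificate (TC) for round $r$ is a threshold signature on $r$ from $2f+1$ timeout messages together with their $2f+1$ $qc_{high}$'s (all of round $<r$). Each round $r$ has a leader $L_r$ (round robin). Each replica keeps $r_{vote}=0$, $r_{cur}=1$, $qc_{high}$ = genesis QC. Propose: upon entering round $r$, $L_r$ multicasts $B=(id,qc_{high},tc,r,0,txn)$, with $tc$ the round-$(r-1)$ TC if $L_r$ entered round $r$ by receiving it, else $\bot$. Vote: upon the first valid proposal $B=(id,qc,tc,r,v,txn)$ from $L_r$, execute Advance Round, Lock, Commit; then if $r=r_{cur}$, $v=v_{cur}=0$, $r>r_{vote}$, and either $r=qc.r+1$ or ($r=tc.r+1$ and $qc.r\ge\max\{q.r: q$ a $qc_{high}$ in $tc\}$),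 send a share on $(id,r,v)$ to $L_{r+1}$ and set $r_{vote}\gets r$. Lock: upon seeing a valid QC $qc$ (formed from votes or contained in a proposal, timeout message or TC), set $qc_{high}\gets\max(qc_{high},qc)$. Commit: whenever there are two certified blocks $B,B'$ with $B'.qc$ certifying $B$ and $B'.r=B.r+1$, commit $B$ and all its ancestors. Advance Round: set $r_{cur}\gets\max(r_{cur},r)$ upon receiving or forming a round-$(r-1)$ QC or TC. Timer: upon entering round $r$, send the round-$(r-1)$ TC to $L_r$ if held and reset a timer; on expiry stop voting in round $r_{cur}$ and multicast a timeout message; upon a valid timeout message or TC execute Advance Round, Lock, Commit; upon $2f+1$ timeout messages form a TC. Definition: a block $B$ is globally direct-committed if $f+1$ honest replicas each successfully perform the Vote step on a proposal of a block $B'$ in round $B.r+1$ such that $B'.qc$ certifies $B$ (these Vote calls invoke Lock, setting $qc_{high}\gets B'.qc$, and produce $f+1$ matching votes). *)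

(* Defs.v *)
(* An abstract operational model of the Jolteon protocol
   (round-based part, view v = 0) sufficient to state safety lemmas.     *)
From Stdlib Require Import Arith List Lia.
Import ListNotations.

(* Blocks and certificates.  Collision-resistant hashing is idealised:
   the id of a block is the block itself (its contents), so "a QC
   certifies B" means the QC is a signature on exactly B.               *)
Inductive block : Type :=
  | Genesis
  | Blk (qc : qcert) (tc : option tcert) (r v txn : nat)
with qcert : Type :=
  | QC (b : block)   (* threshold signature on (b.id, b.r, b.v) *)
with tcert : Type :=
  | TC (r : nat) (ents : list (nat * qcert)).
    (* threshold signature on round r, formed from 2f+1 timeout messages;
       each entry (sender, qc_high of that timeout message)            *)

Definition b_round (b : block) : nat :=
  match b with Genesis => 0 | Blk _ _ r _ _ => r end.
Definition b_view (b : block) : nat :=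
  match b with Genesis => 0 | Blk _ _ _ v _ => v end.
Definition b_qc (b : block) : option qcert :=
  match b with Genesis => None | Blk q _ _ _ _ => Some q end.
Definition qc_block (q : qcert) : block := match q with QC b => b end.
Definition qc_round (q : qcert) : nat := b_round (qc_block q).
Definition tc_round (t : tcert) : nat := match t with TC r _ => r end.
Definition tc_entries (t : tcert) : list (nat * qcert) :=
  match t with TC _ e => e end.
Definition tc_highs (t : tcert) : list qcert := map snd (tc_entries t).

Record local := mkLocal {
  r_vote : nat;
  r_cur : nat;
  r_tout : nat;            (* last round in which the timer expired (0: none) *)
  qc_high : qcert;
  entry_tc : option tcert; (* TC by which r_cur was entered, if any *)
  seen : list nat;         (* rounds whose (first) proposal was handled *)
  proposed : list nat
}.

(* Global state: local states + all messages ever sent by honest replicas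
   (reliable network; Byzantine messages are arbitrary signed data, see
   the validity predicates below). *)
Record gstate := mkG {
  loc : nat -> local;
  props : list block;                  (* honest proposals *)
  votes : list (nat * block);          (* honest vote shares (sender, block) *)
  touts : list (nat * nat * qcert)     (* honest timeouts (sender, round, qc_high) *)
}.

Definition nrep (f : nat) : nat := 3 * f + 1.
Definition leader (f r : nat) : nat := r mod nrep f.
Definition honest (f : nat) (byz : list nat) (i : nat) : Prop :=
  i < nrep f /\ ~ In i byz.
Definition byzantine (f : nat) (byz : list nat) (i : nat) : Prop :=
  i < nrep f /\ In i byz.

Section Protocol.
Variables (f : nat) (byz : list nat).

(* Ideal threshold signatures: a QC on B exists iff 2f+1 distinct replicas
   signed B; honest replicas sign only by voting, Byzantine ones at will. *)
Definition qc_valid (s : gstate) (q : qcert) : Prop :=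
  qc_block q = Genesis \/
  exists l : list nat, NoDup l /\ length l = 2 * f + 1 /\
    forall i, In i l -> byzantine f byz i \/ (i < nrep f /\ In (i, qc_block q) (votes s)).

(* A TC for round r: 2f+1 timeout messages of round r from distinct replicas
   (authenticated: an honest replica's entry is a timeout message it sent),
   together with their qc_high's, all valid and of round < r. *)
Definition tc_valid (s : gstate) (t : tcert) : Prop :=
  length (tc_entries t) = 2 * f + 1 /\ NoDup (map fst (tc_entries t)) /\
  forall i q, In (i, q) (tc_entries t) ->
    qc_round q < tc_round t /\ qc_valid s q /\
    (byzantine f byz i \/ (i < nrep f /\ In (i, tc_round t, q) (touts s))).

Definition block_valid (s : gstate) (b : block) : Prop :=
  match b with
  | Genesis => False
  | Blk q tc _ _ _ => qc_valid s q /\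
      match tc with None => True | Some t => tc_valid s t end
  end.

Definition lock (q : qcert) (st : local) : local :=
  if qc_round (qc_high st) <? qc_round q then
    mkLocal (r_vote st) (r_cur st) (r_tout st) q (entry_tc st) (seen st) (proposed st)
  else st.
Definition lock_tc (t : tcert) (st : local) : local :=
  fold_left (fun acc q => lock q acc) (tc_highs t) st.
Definition adv_qc (q : qcert) (st : local) : local :=
  if r_cur st <? qc_round q + 1 then
    mkLocal (r_vote st) (qc_round q + 1) (r_tout st) (qc_high st) None (seen st) (proposed st)
  else st.
Definition adv_tc (t : tcert) (st : local) : local :=
  if r_cur st <? tc_round t + 1 then
    mkLocal (r_vote st) (tc_round t + 1) (r_tout st) (qc_high st) (Some t) (seen st) (proposed st)
  else st.

Definition see_qc (q : qcert) (st : local) : local := lock q (adv_qc q st).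
Definition see_tc (t : tcert) (st : local) : local := lock_tc t (adv_tc t st).

(* processing a proposal: mark round seen, then Advance Round, Lock (Commit
   does not affect the state relevant here) *)
Definition handle_prop (b : block) (st : local) : local :=
  match b with
  | Genesis => st
  | Blk q tc r _ _ =>
      let st0 := mkLocal (r_vote st) (r_cur st) (r_tout st) (qc_high st)
                   (entry_tc st) (r :: seen st) (proposed st) in
      let st1 := see_qc q st0 in
      match tc with None => st1 | Some t => see_tc t st1 end
  end.

(* voting rule, evaluated on the state after Advance Round / Lock *)
Definition vote_ok (b : block) (st : local) : Prop :=
  match b with
  | Genesis => False
  | Blk q tc r v _ =>
      r = r_cur st /\ v = 0 /\ r_vote st < r /\ r_tout st < r /\
      (r = qc_round q + 1 \/
       exists t, tc = Some t /\ r = tc_round t + 1 /\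
                 forall q', In q' (tc_highs t) -> qc_round q' <= qc_round q)
  end.

Definition upd (g : nat -> local) (i : nat) (st : local) : nat -> local :=
  fun j => if Nat.eqb j i then st else g j.

Definition set_rvote (r : nat) (st : local) : local :=
  mkLocal r (r_cur st) (r_tout st) (qc_high st) (entry_tc st) (seen st) (proposed st).

Inductive step : gstate -> gstate -> Prop :=
  | St_propose s i txn :
      honest f byz i -> i = leader f (r_cur (loc s i)) ->
      ~ In (r_cur (loc s i)) (proposed (loc s i)) ->
      let st := loc s i in
      let b := Blk (qc_high st) (entry_tc st) (r_cur st) 0 txn in
      step s (mkG (upd (loc s) i (mkLocal (r_vote st) (r_cur st) (r_tout st)
                     (qc_high st) (entry_tc st) (seen st) (r_cur st :: proposed st)))
                  (b :: props s) (votes s) (touts s))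
  (* an honest replica handles the first valid proposal of round r from L_r
     (sent by L_r if L_r is honest, arbitrary otherwise) and votes *)
  | St_vote s i q tc r v txn :
      let b := Blk q tc r v txn in
      honest f byz i -> block_valid s b ->
      (honest f byz (leader f r) -> In b (props s)) ->
      ~ In r (seen (loc s i)) ->
      let st := handle_prop b (loc s i) in
      vote_ok b st ->
      step s (mkG (upd (loc s) i (set_rvote r st)) (props s) ((i, b) :: votes s) (touts s))
  | St_novote s i q tc r v txn :
      let b := Blk q tc r v txn in
      honest f byz i -> block_valid s b ->
      (honest f byz (leader f r) -> In b (props s)) ->
      ~ In r (seen (loc s i)) ->
      let st := handle_prop b (loc s i) in
      ~ vote_ok b st ->
      step s (mkG (upd (loc s) i st) (props s) (votes s) (touts s))
  | St_qc s i q :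
      honest f byz i -> qc_valid s q ->
      step s (mkG (upd (loc s) i (see_qc q (loc s i))) (props s) (votes s) (touts s))
  | St_tc s i t :
      honest f byz i -> tc_valid s t ->
      step s (mkG (upd (loc s) i (see_tc t (loc s i))) (props s) (votes s) (touts s))
  (* an honest replica receives a timeout message (honest-sent, or arbitrary
     from a Byzantine sender) *)
  | St_recv_tout s i j r q :
      honest f byz i ->
      (In (j, r, q) (touts s) \/
       (byzantine f byz j /\ qc_valid s q /\ qc_round q < r)) ->
      step s (mkG (upd (loc s) i (see_qc q (loc s i))) (props s) (votes s) (touts s))
  (* timer expiry: stop voting in r_cur and multicast a timeout message *)
  | St_timeout s i :
      honest f byz i -> r_tout (loc s i) < r_cur (loc s i) ->
      let st := loc s i in
      step s (mkG (upd (loc s) i (mkLocal (r_vote st) (r_cur st) (r_cur st)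
                     (qc_high st) (entry_tc st) (seen st) (proposed st)))
                  (props s) (votes s) ((i, r_cur st, qc_high st) :: touts s)).

Definition init_local : local := mkLocal 0 1 0 (QC Genesis) None [] [].
Definition init_state : gstate := mkG (fun _ => init_local) [] [] [].

Inductive reachable : gstate -> Prop :=
  | R_init : reachable init_state
  | R_step s s' : reachable s -> step s s' -> reachable s'.

Definition globally_direct_committed (s : gstate) (B : block) : Prop :=
  exists l : list nat, NoDup l /\ length l = f + 1 /\
    forall i, In i l -> honest f byz i /\
      exists B', In (i, B') (votes s) /\ b_round B' = b_round B + 1 /\
                 b_qc B' = Some (QC B).

End Protocol.

(* Main.v *)
Require Import Defs.
From Stdlib Require Import Arith List.
From Stdlib Require Import Lia Classical.
Import ListNotations.

Definition hi (st : local) := qc_round (qc_high st).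

Lemma lock_hi q st : hi st <= hi (lock q st) /\ qc_round q <= hi (lock q st)
  /\ r_tout (lock q st) = r_tout st.
Proof. unfold lock, hi; destruct (Nat.ltb_spec (qc_round (qc_high st)) (qc_round q)); simpl; lia. Qed.

Lemma lock_tc_hi t st : hi st <= hi (lock_tc t st) /\ r_tout (lock_tc t st) = r_tout st.
Proof.
  unfold lock_tc; generalize (tc_highs t) st; clear st.
  induction l as [|a l IH]; intros st; simpl; [lia|].
  specialize (IH (lock a st)); pose proof (lock_hi a st); lia.
Qed.

Lemma see_qc_hi q st : hi st <= hi (see_qc q st) /\ qc_round q <= hi (see_qc q st)
  /\ r_tout (see_qc q st) = r_tout st.
Proof.
  unfold see_qc. pose proof (lock_hi q (adv_qc q st)).
  assert (hi (adv_qc q st) = hi st /\ r_tout (adv_qc q st) = r_tout st) by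
    (unfold adv_qc; destruct (_ <? _); auto).
  lia.
Qed.

Lemma see_tc_hi t st : hi st <= hi (see_tc t st) /\ r_tout (see_tc t st) = r_tout st.
Proof.
  unfold see_tc. pose proof (lock_tc_hi t (adv_tc t st)).
  assert (hi (adv_tc t st) = hi st /\ r_tout (adv_tc t st) = r_tout st) by
    (unfold adv_tc; destruct (_ <? _); auto).
  lia.
Qed.

Lemma handle_hi b st : hi st <= hi (handle_prop b st) /\ r_tout (handle_prop b st) = r_tout st
  /\ forall q, b_qc b = Some q -> qc_round q <= hi (handle_prop b st).
Proof.
  destruct b as [|q tc r v txn]; simpl.
  - split; [lia|split; [auto|discriminate]].
  - set (st0 := mkLocal _ _ _ _ _ _ _).
    pose proof (see_qc_hi q st0).
    assert (hi st0 = hi st /\ r_tout st0 = r_tout st) by (subst st0; auto).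
    destruct tc as [t|].
    + pose proof (see_tc_hi t (see_qc q st0)).
      split; [lia|split; [lia|]]. intros q' E; inversion E; subst; lia.
    + split; [lia|split; [lia|]]. intros q' E; inversion E; subst; lia.
Qed.

Definition Inv (s : gstate) : Prop :=
  (forall i b q, In (i,b) (votes s) -> b_qc b = Some q -> qc_round q <= hi (loc s i)) /\
  (forall i r q, In (i,r,q) (touts s) -> r <= r_tout (loc s i)) /\
  (forall i b q r q', In (i,b) (votes s) -> b_qc b = Some q -> In (i,r,q') (touts s) ->
      b_round b <= r -> qc_round q <= qc_round q').

Lemma inv_local s i st' P : Inv s -> hi (loc s i) <= hi st' -> r_tout st' = r_tout (loc s i) ->
  Inv (mkG (upd (loc s) i st') P (votes s) (touts s)).
Proof.
  intros [I1 [I2 I3]] Hh Ht. unfold Inv, upd; simpl. split; [|split]; auto.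
  - intros j b q Hin Hq. destruct (Nat.eqb_spec j i); subst.
    + specialize (I1 _ _ _ Hin Hq); lia.
    + eauto.
  - intros j r q Hin. destruct (Nat.eqb_spec j i); subst.
    + specialize (I2 _ _ _ Hin); lia.
    + eauto.
Qed.

Lemma inv_reach f byz s : reachable f byz s -> Inv s.
Proof.
  induction 1 as [|s s' Hr IH Hs].
  - unfold Inv; simpl; repeat split; intros; contradiction.
  - destruct Hs; cbv zeta in *.
    + apply inv_local; auto.
    + subst st; subst b.
      destruct (handle_hi (Blk q tc r v txn) (loc s i)) as [Ha [Hb Hc]].
      set (st1 := handle_prop (Blk q tc r v txn) (loc s i)) in *.
      destruct IH as [I1 [I2 I3]].
      assert (Hvt : r_tout st1 < r) by (destruct H3 as [_ [_ [_ [Hx _]]]]; exact Hx).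
      unfold Inv, upd; simpl. split; [|split].
      * intros j b0 q0 [E|Hin] Hq.
        -- inversion E; subst. rewrite Nat.eqb_refl. unfold hi in *; simpl. apply Hc; auto.
        -- destruct (Nat.eqb_spec j i); subst.
           ++ specialize (I1 _ _ _ Hin Hq). unfold hi in *; simpl; lia.
           ++ eauto.
      * intros j r0 q0 Hin. destruct (Nat.eqb_spec j i); subst.
        -- specialize (I2 _ _ _ Hin); simpl; lia.
        -- eauto.
      * intros j b0 q0 r0 q' [E|Hin] Hq Ht Hle.
        -- inversion E; subst. specialize (I2 _ _ _ Ht). simpl in Hle. lia.
        -- eauto.
    + pose proof (handle_hi b (loc s i)). apply inv_local; auto; tauto.
    + pose proof (see_qc_hi q (loc s i)). apply inv_local; auto; tauto.
    + pose proof (see_tc_hi t (loc s i)). apply inv_local; auto; tauto.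
    + pose proof (see_qc_hi q (loc s i)). apply inv_local; auto; tauto.
    + subst st.
      destruct IH as [I1 [I2 I3]].
      unfold Inv, upd; simpl. split; [|split].
      * intros j b q0 Hin Hq. destruct (Nat.eqb_spec j i); subst.
        -- specialize (I1 _ _ _ Hin Hq). unfold hi in *; simpl; lia.
        -- eauto.
      * intros j r0 q0 [E|Hin].
        -- inversion E; subst. rewrite Nat.eqb_refl; simpl; lia.
        -- destruct (Nat.eqb_spec j i); subst.
           ++ specialize (I2 _ _ _ Hin); simpl; lia.
           ++ eauto.
      * intros j b q0 r0 q' Hin Hq [E|Ht] Hle.
        -- inversion E; subst. exact (I1 _ _ _ Hin Hq).
        -- eauto.
Qed.

Lemma pigeon (n : nat) (l1 l2 : list nat) : NoDup l1 -> NoDup l2 ->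
  (forall x, In x l1 -> x < n) -> (forall x, In x l2 -> x < n) ->
  n < length l1 + length l2 -> exists x, In x l1 /\ In x l2.
Proof.
  intros N1 N2 B1 B2 Hl. apply NNPP; intro Hn.
  assert (ND : NoDup (l1 ++ l2)).
  { apply NoDup_app; auto. intros x H1 H2. apply Hn; eauto. }
  assert (Inc : incl (l1 ++ l2) (seq 0 n)).
  { intros x Hx. apply in_seq. apply in_app_or in Hx as [H|H];
      [specialize (B1 _ H)|specialize (B2 _ H)]; lia. }
  pose proof (NoDup_incl_length ND Inc). rewrite length_app, length_seq in H. lia.
Qed.

Theorem lemma2 (f : nat) (byz : list nat)
  (Hbyz : NoDup byz /\ length byz <= f)
  (s : gstate) (Hreach : reachable f byz s)
  (B : block) (Hcom : globally_direct_committed f byz s B)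
  (t : tcert) (Ht : tc_valid f byz s t) (Hr : b_round B < tc_round t) :
  exists q, In q (tc_highs t) /\ b_round B <= qc_round q.
Proof.
  destruct (inv_reach _ _ _ Hreach) as [_ [_ H3]].
  destruct Hcom as [l [Nl [Ll Hl]]].
  destruct Ht as [Le [Ne He]].
  destruct (pigeon (nrep f) l (map fst (tc_entries t)) Nl Ne) as [i [Hi1 Hi2]].
  - intros x Hx. destruct (Hl _ Hx) as [[Hh _] _]; exact Hh.
  - intros x Hx. apply in_map_iff in Hx as [[x' q] [E Hx]]. simpl in E; subst.
    destruct (He _ _ Hx) as [_ [_ [[Hb _]|[Hb _]]]]; exact Hb.
  - rewrite length_map. unfold nrep. lia.
  - apply in_map_iff in Hi2 as [[i' q] [E Hx]]. simpl in E; subst i'.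
    destruct (Hl _ Hi1) as [[_ Hnb] [B' [Hv [HrB Hq]]]].
    destruct (He _ _ Hx) as [_ [_ [[_ Hb]|[_ Htt]]]]; [contradiction|].
    exists q. split.
    + unfold tc_highs. apply in_map_iff. exists (i, q); auto.
    + pose proof (H3 _ _ _ _ _ Hv Hq Htt ltac:(lia)). simpl in H. exact H.
Qed.
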